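(* Let $k\ge 2$ and let $P$ be a finite poset excluding $\mathbf{k}+\mathbf{k}$, of height $h$. If every convex subposet $Q$ of $P$ of height at most $4k-4$ satisfies $\dim(Q)\le d_1$, then $\dim(P)\le (h+1)d_1$.
   Context: $\mathbf{k}+\mathbf{k}$ is the disjoint union of two $k$-element chains with all points of one incomparable to all points of the other; $P$ excludes it if no subposet is isomorphic to it. A subposet $Q$ is convex if $x,z\in Q$ and $x<y<z$ imply $y\in Q$. $\dim$ denotes the Dushnik–Miller dimension. *)

(* Defs.v *)
From mathcomp Require Import all_boot.
Set Implicit Arguments. Unset Strict Implicit. Unset Printing Implicit Defensive.

Section Posets.
Variable T : finType.

Definition partial_order (le : rel T) : Prop :=
  [/\ reflexive le, antisymmetric le & transitive le].

(* The order of k + k on 'I_k + 'I_k: two disjoint chains, mutually incomparable. *)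
Definition kk_le (k : nat) (a b : 'I_k + 'I_k) : bool :=
  match a, b with
  | inl i, inl j => (i <= j)%N
  | inr i, inr j => (i <= j)%N
  | _, _ => false
  end.

Definition contains_kk (le : rel T) (k : nat) : Prop :=
  exists phi : 'I_k + 'I_k -> T,
    injective phi /\ forall a b, le (phi a) (phi b) = kk_le a b.

Definition excludes_kk (le : rel T) (k : nat) : Prop := ~ contains_kk le k.

Definition is_chain (le : rel T) (C : {set T}) : bool :=
  [forall x in C, forall y in C, le x y || le y x].

Definition height (le : rel T) (A : {set T}) : nat :=
  \max_(C : {set T} | (C \subset A) && is_chain le C) #|C|.

Definition convex (le : rel T) (Q : {set T}) : Prop :=
  forall x y z, x \in Q -> z \in Q -> le x y -> le y z -> y \in Q.

Definition linear_ext_on (le : rel T) (A : {set T}) (L : rel T) : Prop :=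
  [/\ {in A, reflexive L}, {in A &, antisymmetric L},
      {in A & &, transitive L}, {in A &, total L}
    & {in A &, forall x y, le x y -> L x y}].

Definition realizer_on (le : rel T) (A : {set T}) (t : nat) (Ls : 'I_t -> rel T) : Prop :=
  (forall i, linear_ext_on le A (Ls i)) /\ ({in A &, forall x y, le x y <-> (forall i, Ls i x y)}).

(* dim(A, le) <= d (Dushnik-Miller dimension = least size of a realizer):
   some realizer of size at most d exists.
   Convention: a realizer consists of at least one linear extension. *)
Definition dim_le (le : rel T) (A : {set T}) (d : nat) : Prop :=
  exists (t : nat) (Ls : 'I_t -> rel T), [/\ (0 < t)%N, (t <= d)%N & realizer_on le A Ls].

End Posets.

(* Main.v *)
Require Import Defs.
From mathcomp Require Import all_boot.
From mathcomp Require Import zify.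
From Stdlib Require Import ClassicalEpsilon.
Set Implicit Arguments. Unset Strict Implicit. Unset Printing Implicit Defensive.


Definition rk (T : finType) (R : rel T) (Y : {set T}) (x : T) := #|[set z in Y | R z x]|.

Lemma po_refl (T : finType) (R : rel T) : partial_order R -> forall x, R x x.
Proof. by case. Qed.
Lemma po_anti (T : finType) (R : rel T) : partial_order R -> forall x y, R x y -> R y x -> x = y.
Proof. by case=> _ A _ x y h1 h2; apply: A; rewrite h1 h2. Qed.
Lemma po_trans (T : finType) (R : rel T) : partial_order R -> forall x y z, R x y -> R y z -> R x z.
Proof. by case=> _ _ Tr x y z h1 h2; apply: Tr h2. Qed.

Lemma chainP (T : finType) (R : rel T) (Y : {set T}) :
  is_chain R Y -> forall x y, x \in Y -> y \in Y -> R x y || R y x.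
Proof. by move=> /forallP H x y hx hy; move: (H x) => /implyP /(_ hx) /forallP /(_ y) /implyP /(_ hy). Qed.

Lemma rk_le (T : finType) (R : rel T) (Y : {set T}) : partial_order R -> is_chain R Y ->
  forall x y, x \in Y -> y \in Y -> R x y = (rk R Y x <= rk R Y y).
Proof.
move=> Hpo Hc x y hx hy.
case Rxy: (R x y).
  apply/esym/subset_leq_card/subsetP => z; rewrite !inE => /andP[-> hz] /=.
  exact: (po_trans Hpo hz Rxy).
have Ryx : R y x by move: (chainP Hc hx hy); rewrite Rxy.
apply/esym/negbTE; rewrite -ltnNge; apply: proper_card; apply/properP; split.
  apply/subsetP => z; rewrite !inE => /andP[-> hz] /=; exact: (po_trans Hpo hz Ryx).
exists x; rewrite !inE ?hx ?(po_refl Hpo) //=; try by rewrite Rxy.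
Qed.

Lemma rk_pos (T : finType) (R : rel T) (Y : {set T}) : partial_order R -> forall x, x \in Y -> 0 < rk R Y x.
Proof. move=> Hpo x hx; apply/card_gt0P; exists x; by rewrite !inE hx (po_refl Hpo). Qed.

Lemma rk_exists (T : finType) (R : rel T) (Y : {set T}) : partial_order R -> is_chain R Y ->
  forall n, 0 < n -> n <= #|Y| -> exists2 x, x \in Y & rk R Y x = n.
Proof.
move=> Hpo Hc n n0 nY.
have inj : {in enum Y &, injective (rk R Y)}.
  move=> x y; rewrite !mem_enum => hx hy e.
  apply: (po_anti Hpo); rewrite (rk_le Hpo Hc) // e //.
have U : uniq [seq rk R Y x | x <- enum Y] by rewrite map_inj_in_uniq // enum_uniq.
have S : {subset [seq rk R Y x | x <- enum Y] <= iota 1 #|Y|}.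
  move=> j /mapP[x]; rewrite mem_enum => hx ->; rewrite mem_iota.
  rewrite rk_pos //= add1n ltnS; apply: subset_leq_card; apply/subsetP => z; rewrite inE; by case/andP.
have Sz : size (iota 1 #|Y|) <= size [seq rk R Y x | x <- enum Y] by rewrite size_iota size_map -cardE.
have [_ E] := uniq_min_size U S Sz.
have : n \in iota 1 #|Y| by rewrite mem_iota; lia.
by rewrite -E => /mapP[x]; rewrite mem_enum => hx ->; exists x.
Qed.

Lemma rk_min (T : finType) (R : rel T) (Y : {set T}) : partial_order R -> is_chain R Y ->
  forall p, p \in Y -> rk R Y p = 1 -> forall y, y \in Y -> R p y.
Proof. move=> Hpo Hc p hp e y hy; rewrite (rk_le Hpo Hc) // e; exact: rk_pos. Qed.

Lemma kk_lemma (T : finType) (le : rel T) (k : nat) (A B : {set T}) : partial_order le -> 0 < k ->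
  is_chain le A -> is_chain le B -> k <= #|A| -> k <= #|B| ->
  (forall a b, a \in A -> b \in B -> ~~ le a b && ~~ le b a) -> contains_kk le k.
Proof.
move=> Hpo k0 cA cB kA kB inc.
case: k k0 kA kB => [//|k] _ kA kB.
have [x0 hx0] : exists x0, x0 \in A by apply/card_gt0P; lia.
pose pk (X : {set T}) (j : 'I_k.+1) := odflt x0 [pick x in X | rk le X x == j.+1].
have pkP : forall X, is_chain le X -> k.+1 <= #|X| -> forall j, pk X j \in X /\ rk le X (pk X j) = j.+1.
  move=> X cX kX j; rewrite /pk; case: pickP => [x /andP[-> /eqP ->] //|].
  have [x hx e] := rk_exists Hpo cX (ltn0Sn j) (leq_trans (ltn_ord j) kX).
  by move=> /(_ x); rewrite hx e eqxx.
pose phi s := match s with inl j => pk A j | inr j => pk B j end.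
have E : forall a b, le (phi a) (phi b) = kk_le a b.
  case=> i [] j /=.
  - have [h1 e1] := pkP _ cA kA i; have [h2 e2] := pkP _ cA kA j.
    by rewrite (rk_le Hpo cA) // e1 e2.
  - have [h1 _] := pkP _ cA kA i; have [h2 _] := pkP _ cB kB j.
    by move: (inc _ _ h1 h2) => /andP[/negbTE -> _].
  - have [h1 _] := pkP _ cB kB i; have [h2 _] := pkP _ cA kA j.
    by move: (inc _ _ h2 h1) => /andP[_ /negbTE ->].
  - have [h1 e1] := pkP _ cB kB i; have [h2 e2] := pkP _ cB kB j.
    by rewrite (rk_le Hpo cB) // e1 e2.
exists phi; split => //.
move=> a b e.
have h1 := E a b; have h2 := E b a.
rewrite e (po_refl Hpo) // in h1 h2.
case: a b h1 h2 {e} => i [] j //= h1 h2; have -> // : i = j by apply: ord_inj; apply/eqP; rewrite eqn_leq -h1 -h2.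
Qed.


Definition Dn (T : finType) (le : rel T) (C : {set T}) y := [set c in C | (c != y) && le c y].
Definition Up (T : finType) (le : rel T) (C : {set T}) y := [set c in C | (y != c) && le y c].
Definition Mset (T : finType) (le : rel T) (C : {set T}) (h i : nat) :=
  [set y | (#|Dn le C y| <= i) && (#|Up le C y| <= h - i)].
Definition blk (T : finType) (le : rel T) (C : {set T}) (h i : nat) y : nat :=
  if h - i < #|Up le C y| then 0 else if i < #|Dn le C y| then 2 else 1.
Definition ds (T : finType) (le : rel T) x := #|[set z | le z x]|.
Definition L0 (T : finType) (le : rel T) x y :=
  (ds le x < ds le y) || ((ds le x == ds le y) && (enum_rank x <= enum_rank y)).
Definition Ext (T : finType) (le : rel T) (C : {set T}) (h i : nat) (L : rel T) x y :=
  if blk le C h i x == blk le C h i y then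
    (if blk le C h i x == 1 then L x y else L0 le x y)
  else blk le C h i x < blk le C h i y.

Lemma Dn_mono (T : finType) (le : rel T) C : partial_order le ->
  forall x y, le x y -> Dn le C x \subset Dn le C y.
Proof.
move=> Hpo x y lxy; apply/subsetP => c; rewrite !inE => /and3P[-> ncx lcx] /=.
rewrite (po_trans Hpo lcx lxy) andbT; apply/eqP => ecy; subst c.
by move: ncx; rewrite (po_anti Hpo lcx lxy) eqxx.
Qed.

Lemma Up_anti (T : finType) (le : rel T) C : partial_order le ->
  forall x y, le x y -> Up le C y \subset Up le C x.
Proof.
move=> Hpo x y lxy; apply/subsetP => c; rewrite !inE => /and3P[-> ncx lcx] /=.
rewrite (po_trans Hpo lxy lcx) andbT; apply/eqP => ecy; subst c.
by move: ncx; rewrite (po_anti Hpo lcx lxy) eqxx.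
Qed.

Lemma UpDn_card (T : finType) (le : rel T) C : partial_order le ->
  forall x y, (forall c, c \in Up le C x -> c \in Dn le C y -> False) ->
  #|Up le C x| + #|Dn le C y| <= #|C|.
Proof.
move=> Hpo x y H.
have -> : #|Up le C x| + #|Dn le C y| = #|Up le C x :|: Dn le C y|.
  rewrite cardsU; suff -> : Up le C x :&: Dn le C y = set0 by rewrite cards0 subn0.
  apply/setP => c; rewrite inE in_set0; apply/negbTE/negP => /andP[h1 h2]; exact: H h1 h2.
apply: subset_leq_card; apply/subsetP => c; rewrite !inE; by case/orP => /andP[].
Qed.

Lemma UpDn_self (T : finType) (le : rel T) C : partial_order le ->
  forall x y, ~~ le x y -> #|Up le C x| + #|Dn le C y| <= #|C|.
Proof.
move=> Hpo x y nl; apply: UpDn_card => // c; rewrite !inE => /and3P[_ _ h1] /and3P[_ _ h2].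
by move: nl; rewrite (po_trans Hpo h1 h2).
Qed.

Lemma UpDn_same (T : finType) (le : rel T) C : partial_order le ->
  forall x, #|Up le C x| + #|Dn le C x| <= #|C|.
Proof.
move=> Hpo x; apply: UpDn_card => // c; rewrite !inE => /and3P[_ h0 h1] /and3P[_ _ h2].
by move: h0; rewrite (po_anti Hpo h1 h2) eqxx.
Qed.

Lemma ds_lt (T : finType) (le : rel T) : partial_order le ->
  forall x y, le x y -> x != y -> ds le x < ds le y.
Proof.
move=> Hpo x y lxy nxy; apply: proper_card; apply/properP; split.
  apply/subsetP => z; rewrite !inE => h; exact: (po_trans Hpo h lxy).
exists y; rewrite !inE ?(po_refl Hpo) //; apply/negP => lyx.
by move: nxy; rewrite (po_anti Hpo lxy lyx) eqxx.
Qed.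

Lemma L0_lin (T : finType) (le : rel T) : partial_order le ->
  [/\ reflexive (L0 le), antisymmetric (L0 le), transitive (L0 le), total (L0 le)
    & forall x y, le x y -> L0 le x y].
Proof.
move=> Hpo; rewrite /L0; split.
- by move=> x; rewrite eqxx leqnn orbT.
- move=> x y /andP[h1 h2]; apply: enum_rank_inj; apply: val_inj => /=.
  move: h1 h2; case: (ltngtP (ds le x) (ds le y)) => //= _ h1 h2; apply/eqP; by rewrite eqn_leq h1 h2.
- move=> y x z; case: (ltngtP (ds le x) (ds le y)) => //= h1;
  case: (ltngtP (ds le y) (ds le z)) => //= h2;
  case: (ltngtP (ds le x) (ds le z)) => //= h3; try lia.
- move=> x y; case: (ltngtP (ds le x) (ds le y)) => //= _; exact: leq_total.
- move=> x y lxy; case: (eqVneq x y) => [->|nxy]; first by rewrite eqxx leqnn orbT.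
  by rewrite (ds_lt Hpo lxy nxy).
Qed.

Lemma M_convex (T : finType) (le : rel T) (C : {set T}) (h i : nat) : partial_order le ->
  convex le (Mset le C h i).
Proof.
move=> Hpo x y z; rewrite !inE => /andP[_ ux] /andP[dz _] lxy lyz.
rewrite (leq_trans (subset_leq_card (Dn_mono C Hpo lyz)) dz).
by rewrite (leq_trans (subset_leq_card (Up_anti C Hpo lxy)) ux).
Qed.

Lemma blk_M (T : finType) (le : rel T) (C : {set T}) (h i : nat) y :
  (blk le C h i y == 1) = (y \in Mset le C h i).
Proof. rewrite /blk inE; case: ltnP => a; case: ltnP => b //=; lia. Qed.

Lemma blk_mono (T : finType) (le : rel T) (C : {set T}) (h i : nat) : partial_order le -> #|C| = h ->
  forall x y, le x y -> blk le C h i x <= blk le C h i y.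
Proof.
move=> Hpo hC x y lxy.
have d := subset_leq_card (Dn_mono C Hpo lxy).
have u := subset_leq_card (Up_anti C Hpo lxy).
have s := UpDn_same C Hpo y.
rewrite /blk; case: (ltnP (h - i) #|Up le C x|); case: (ltnP i #|Dn le C x|); case: (ltnP (h - i) #|Up le C y|); case: (ltnP i #|Dn le C y|); lia.
Qed.

Lemma blk_le2 (T : finType) (le : rel T) (C : {set T}) (h i : nat) y : blk le C h i y <= 2.
Proof. by rewrite /blk; case: ifP => // _; case: ifP. Qed.

Lemma Ext_lin (T : finType) (le : rel T) (C : {set T}) (h i : nat) L : partial_order le -> #|C| = h ->
  linear_ext_on le (Mset le C h i) L -> linear_ext_on le [set: T] (Ext le C h i L).
Proof.
move=> Hpo hC [Lr La Lt Ltot Lext].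
have [Or Oa Ot Otot Oext] := L0_lin Hpo.
have bM := @blk_M T le C h i.
have b2 := @blk_le2 T le C h i.
rewrite /Ext; split.
- move=> x _; rewrite eqxx; case: ifP => b; last exact: Or.
  by apply: Lr; rewrite -bM.
- move=> x y _ _; move: (bM x) (bM y) (b2 x) (b2 y).
  case: (blk le C h i x) => [|[|[|a]]]; case: (blk le C h i y) => [|[|[|b]]] //= hx hy _ _;
    try (by apply: Oa).
  by apply: La; rewrite -?hx -?hy.
- move=> y x z; rewrite ?inE => _ _ _; move: (bM x) (bM y) (bM z) (b2 x) (b2 y) (b2 z).
  case: (blk le C h i x) => [|[|[|a]]]; case: (blk le C h i y) => [|[|[|b]]];
  case: (blk le C h i z) => [|[|[|c]]] //= hx hy hz _ _ _; try (by apply: Ot).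
  by apply: Lt; rewrite -?hx -?hy -?hz.
- move=> x y _ _; move: (bM x) (bM y) (b2 x) (b2 y).
  case: (blk le C h i x) => [|[|[|a]]]; case: (blk le C h i y) => [|[|[|b]]] //= hx hy _ _;
    try (by apply: Otot).
  by apply: Ltot; rewrite -?hx -?hy.
- move=> x y _ _ lxy.
  have m := blk_mono i Hpo hC lxy.
  move: (bM x) (bM y) m (b2 x) (b2 y).
  case: (blk le C h i x) => [|[|[|a]]]; case: (blk le C h i y) => [|[|[|b]]] //= hx hy m _ _;
    try (by apply: Oext).
  by apply: Lext; rewrite -?hx -?hy.
Qed.


Lemma chain_sub (T : finType) (le : rel T) (A B : {set T}) :
  A \subset B -> is_chain le B -> is_chain le A.
Proof.
move=> /subsetP sAB cB; apply/forallP => x; apply/implyP => hx; apply/forallP => y; apply/implyP => hy.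
exact: (chainP cB (sAB _ hx) (sAB _ hy)).
Qed.

Lemma chain_flip (T : finType) (le : rel T) (A : {set T}) :
  is_chain le A -> is_chain (fun x y => le y x) A.
Proof.
move=> cA; apply/forallP => x; apply/implyP => hx; apply/forallP => y; apply/implyP => hy.
by rewrite orbC; exact: (chainP cA hx hy).
Qed.

Lemma po_flip (T : finType) (le : rel T) : partial_order le -> partial_order (fun x y => le y x).
Proof.
case=> r a t; split => //.
- by move=> x y /andP[h1 h2]; apply: a; rewrite h1 h2.
- by move=> x y z h1 h2; exact: t h1.
Qed.

Lemma incomp_bound (T : finType) (le : rel T) (k : nat) (A S : {set T}) : partial_order le ->
  0 < k -> excludes_kk le k -> is_chain le A -> #|A| = k -> is_chain le S ->
  (forall a c, a \in A -> c \in S -> ~~ le c a && ~~ le a c) -> #|S| <= k - 1.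
Proof.
move=> Hpo k0 nkk cA hA cS inc; rewrite leqNgt; apply/negP => big.
apply: nkk; apply: (kk_lemma Hpo k0 cA cS); [by rewrite hA| lia|].
move=> a c ha hc; have := inc _ _ ha hc; by rewrite andbC.
Qed.

Lemma M_height (T : finType) (le : rel T) (k h i : nat) (C Y : {set T}) : partial_order le ->
  2 <= k -> excludes_kk le k -> is_chain le C -> #|C| = h ->
  (forall Z : {set T}, is_chain le Z -> #|Z| <= h) -> i <= h ->
  Y \subset Mset le C h i -> is_chain le Y -> #|Y| <= 4 * k - 4.
Proof.
move=> Hpo k2 nkk cC hC Cmax ih /subsetP YM cY.
rewrite leqNgt; apply/negP => big.
pose R' := fun x y : T => le y x.
have Hpo' : partial_order R' := po_flip Hpo.
have cY' : is_chain R' Y := chain_flip cY.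
have [p pY rp] := rk_exists Hpo cY (ltn0Sn 0) (ltac:(clear -big k2; lia) : 1 <= #|Y|).
have [q qY rq] := rk_exists Hpo' cY' (ltn0Sn 0) (ltac:(clear -big k2; lia) : 1 <= #|Y|).
have [u uY ru] := rk_exists Hpo cY (ltac:(clear -big k2; lia) : 0 < k) (ltac:(clear -big k2; lia) : k <= #|Y|).
have [v vY rv] := rk_exists Hpo' cY' (ltac:(clear -big k2; lia) : 0 < k) (ltac:(clear -big k2; lia) : k <= #|Y|).
have pmin : forall y, y \in Y -> le p y := rk_min Hpo cY pY rp.
have qmax : forall y, y \in Y -> le y q := rk_min Hpo' cY' qY rq.
have refl := po_refl Hpo.
have anti := po_anti Hpo.
have trans := po_trans Hpo.
pose Bot := [set z in Y | le z u].
pose Top := [set z in Y | le v z].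
pose Mid := [set z in Y | le u z && le z v].
have hBot : #|Bot| = k by [].
have hTop : #|Top| = k by [].
have stepA : #|Y| <= (k - 1) + #|Mid| + (k - 1).
  have sub : Y \subset ((Bot :\ u) :|: Mid) :|: (Top :\ v).
    apply/subsetP => z hz; rewrite !inE hz /=.
    case/orP: (chainP cY hz uY) => lzu.
      case: (eqVneq z u) => [->|nzu]; last by rewrite lzu.
      case/orP: (chainP cY uY vY) => luv; first by rewrite refl luv orbT.
      case: (eqVneq u v) => [e|nvu]; first by rewrite -e !refl orbT.
      by rewrite luv !orbT.
    case/orP: (chainP cY hz vY) => lzv; first by rewrite lzu lzv orbT.
    case: (eqVneq z v) => [e|nzv]; first by subst z; rewrite lzu refl orbT.
    by rewrite lzv !orbT.
  have e1 : #|Bot :\ u| = k - 1 by move: (cardsD1 u Bot); rewrite inE uY refl hBot; clear -k2; lia.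
  have e2 : #|Top :\ v| = k - 1 by move: (cardsD1 v Top); rewrite inE vY refl hTop; clear -k2; lia.
  apply: (leq_trans (subset_leq_card sub)).
  apply: (leq_trans (leq_card_setU _ _)); rewrite e2 leq_add2r.
  by apply: (leq_trans (leq_card_setU _ _)); rewrite e1.
pose X := Dn le C u :|: Up le C v.
pose W := C :\: X.
have stepB : #|Mid| <= #|W|.
  case: (set_0Vmem Mid) => [->|[w hw]]; first by rewrite cards0.
  have luv : le u v by move: hw; rewrite inE => /and3P[_ h1 h2]; exact: (trans _ _ _ h1 h2).
  have XC : X \subset C by apply/subsetP => c; rewrite !inE => /orP[] /andP[].
  have mx : forall z c, z \in Mid -> c \in X -> le z c || le c z.
    move=> z c; rewrite !inE => /and3P[_ h1 h2] /orP[] /and3P[_ _ h3].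
      by rewrite (trans _ _ _ h3 h1) orbT.
    by rewrite (trans _ _ _ h2 h3).
  have cZ : is_chain le (Mid :|: X).
    apply/forallP => a; apply/implyP => ha; apply/forallP => b; apply/implyP => hb.
    case/setUP: ha => ha; case/setUP: hb => hb.
    - by apply: (chainP cY); [move: ha | move: hb]; rewrite !inE => /andP[].
    - exact: (mx _ _ ha hb).
    - by rewrite orbC; exact: (mx _ _ hb ha).
    - by apply: (chainP cC); apply: (subsetP XC).
  have := Cmax _ cZ.
  rewrite cardsU.
  have -> : Mid :&: X = set0.
    apply/setP => z; rewrite in_set0 !inE; apply/negbTE/negP => /andP[/and3P[_ h1 h2]] /orP[] /and3P[_ n h3].
      by move: n; rewrite (anti _ _ h3 h1) eqxx.
    by move: n; rewrite (anti _ _ h2 h3) eqxx.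
  rewrite cards0 subn0.
  have := cardsID X C; rewrite (setIidPr XC) -/W; clear -hC; lia.
pose Wlo := [set c in W | ~~ ((p != c) && le p c)].
pose Whi := [set c in W | ~~ ((c != q) && le c q)].
have stepC : W \subset Wlo :|: Whi.
  apply/subsetP => c hc; apply/setUP; move: (hc); rewrite inE => /andP[_ cC'].
  case: (boolP ((p != c) && le p c)) => [/andP[npc lpc]|h1]; last by left; rewrite inE hc h1.
  case: (boolP ((c != q) && le c q)) => [/andP[ncq lcq]|h2]; last by right; rewrite inE hc h2.
  exfalso.
  have pM := YM _ pY; have qM := YM _ qY.
  move: pM qM; rewrite !inE => /andP[_ up] /andP[dq _].
  have s1 : c |: Up le C c \subset Up le C p.
    apply/subsetP => c'; rewrite !inE => /orP[/eqP ->|/and3P[hc' ncc' lcc']]; first by rewrite cC' npc lpc.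
    rewrite hc' (trans _ _ _ lpc lcc') andbT; apply/eqP => e; subst c'.
    by move: npc; rewrite (anti _ _ lpc lcc') eqxx.
  have s2 : c |: Dn le C c \subset Dn le C q.
    apply/subsetP => c'; rewrite !inE => /orP[/eqP ->|/and3P[hc' ncc' lcc']]; first by rewrite cC' ncq lcq.
    rewrite hc' (trans _ _ _ lcc' lcq) andbT; apply/eqP => e; subst c'.
    by move: ncq; rewrite (anti _ _ lcq lcc') eqxx.
  have s3 : C \subset c |: (Up le C c :|: Dn le C c).
    apply/subsetP => c' hc'; rewrite !inE hc' /=.
    case: (eqVneq c' c) => //= ncc'.
    by rewrite orbC (chainP cC hc' cC').
  have c1 := subset_leq_card s1; have c2 := subset_leq_card s2; have c3 := subset_leq_card s3.
  rewrite !cardsU1 !inE eqxx /= in c1 c2 c3.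
  rewrite !andbF /= in c1 c2 c3.
  have c4 : #|Up le C c :|: Dn le C c| <= #|Up le C c| + #|Dn le C c| by apply: leq_card_setU.
  clear -c1 c2 c3 c4 up dq ih hC; lia.
pose Sbot := [set c in C | [forall y in Bot, ~~ le c y && ~~ le y c]].
pose Stop := [set c in C | [forall y in Top, ~~ le c y && ~~ le y c]].
have cBot : is_chain le Bot by apply: (chain_sub _ cY); apply/subsetP => z; rewrite inE => /andP[].
have cTop : is_chain le Top by apply: (chain_sub _ cY); apply/subsetP => z; rewrite inE => /andP[].
have cSbot : is_chain le Sbot by apply: (chain_sub _ cC); apply/subsetP => z; rewrite inE => /andP[].
have cStop : is_chain le Stop by apply: (chain_sub _ cC); apply/subsetP => z; rewrite inE => /andP[].
have bSbot : #|Sbot| <= k - 1.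
  apply: (incomp_bound Hpo _ nkk cBot hBot cSbot) => [|a c ha]; first (clear -k2; lia).
  by rewrite inE => /andP[_ /forall_inP /(_ _ ha)].
have bStop : #|Stop| <= k - 1.
  apply: (incomp_bound Hpo _ nkk cTop hTop cStop) => [|a c ha]; first (clear -k2; lia).
  by rewrite inE => /andP[_ /forall_inP /(_ _ ha)].
have sLo : Wlo \subset Sbot.
  apply/subsetP => c; rewrite inE => /andP[hW npc]; move: hW; rewrite inE => /andP[nX cC'].
  move: nX; rewrite !inE cC' /= negb_or => /andP[nDu nUv].
  apply/forall_inP => y; rewrite ?inE => /andP[hy lyu].
  have ncy : ~~ le c y.
    apply/negP => lcy.
    have lcu := trans _ _ _ lcy lyu.
    move: nDu; rewrite lcu andbT negbK => /eqP ecu; subst c.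
    have lpu := pmin _ uY.
    move: npc; rewrite lpu andbT negbK => /eqP epu; subst p.
    by move: rp; rewrite ru; clear -k2; lia.
  rewrite ncy /=; apply/negP => lyc.
  have lpc := trans _ _ _ (pmin _ hy) lyc.
  move: npc; rewrite lpc andbT negbK => /eqP epc; subst p.
  by move: ncy; rewrite (anti _ _ (pmin _ hy) lyc) refl.
have sHi : Whi \subset Stop.
  apply/subsetP => c; rewrite inE => /andP[hW ncq]; move: hW; rewrite inE => /andP[nX cC'].
  move: nX; rewrite !inE cC' /= negb_or => /andP[nDu nUv].
  apply/forall_inP => y; rewrite ?inE => /andP[hy lvy].
  have nyc : ~~ le y c.
    apply/negP => lyc.
    have lvc := trans _ _ _ lvy lyc.
    move: nUv; rewrite lvc andbT negbK => /eqP evc; subst c.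
    have lvq := qmax _ vY.
    move: ncq; rewrite lvq andbT negbK => /eqP evq; subst q.
    by move: rq; rewrite rv; clear -k2; lia.
  rewrite nyc andbT; apply/negP => lcy.
  have lcq := trans _ _ _ lcy (qmax _ hy).
  move: ncq; rewrite lcq andbT negbK => /eqP ecq; subst q.
  by move: nyc; rewrite (anti _ _ lcy (qmax _ hy)) refl.
have := subset_leq_card stepC.
have : #|Wlo :|: Whi| <= #|Wlo| + #|Whi| by apply: leq_card_setU.
have := subset_leq_card sLo; have := subset_leq_card sHi.
clear -stepA stepB bSbot bStop big k2; lia.
Qed.


Lemma dim_norm (T : finType) (le : rel T) (Q : {set T}) (d : nat) : dim_le le Q d ->
  exists F : nat -> rel T, [/\ 0 < d, forall s, linear_ext_on le Q (F s) &
    {in Q &, forall x y, le x y <-> (forall s, s < d -> F s x y)}].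
Proof.
case=> t [Ls [t0 td [Hlin Hre]]].
pose F := fun s : nat => if @insub nat (fun j => j < t) 'I_t s is Some j then Ls j else Ls (Ordinal t0).
exists F; split.
- exact: leq_trans t0 td.
- by move=> s; rewrite /F; case: insub.
- move=> x y hx hy; rewrite Hre //; split.
    move=> H s _; rewrite /F; by case: insub.
  move=> H j; have := H j (leq_trans (ltn_ord j) td); rewrite /F insubT /=.
  - exact: ltn_ord.
  - by move=> p; have -> : Sub (nat_of_ord j) p = j by apply: val_inj.
Qed.

Unset Implicit Arguments.
Theorem proposition8 (T : finType) (le : rel T) (k h d1 : nat) :
  partial_order le ->
  (2 <= k)%N ->
  excludes_kk le k ->
  height le [set: T] = h ->
  (forall Q : {set T}, convex le Q -> (height le Q <= 4 * k - 4)%N -> dim_le le Q d1) ->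
  dim_le le [set: T] ((h + 1) * d1).
Proof.
move=> Hpo k2 nkk hH Hdim.
pose P := fun C : {set T} => (C \subset [set: T]) && is_chain le C.
have P0 : P set0 by rewrite /P sub0set; apply/forallP => x; rewrite in_set0.
case: (arg_maxnP (fun C : {set T} => #|C|) P0) => C /andP[_ cC] Cbig.
have Cmax : forall Z : {set T}, is_chain le Z -> #|Z| <= h.
  move=> Z cZ; rewrite -hH /height.
  apply: (@leq_bigmax_cond _ (fun C : {set T} => (C \subset [set: T]) && is_chain le C) (fun C => #|C|) Z).
  by rewrite subsetT.
have hC : #|C| = h.
  apply/eqP; rewrite eqn_leq Cmax // -hH; apply/bigmax_leqP => Z PZ; exact: Cbig.
have Hn : forall i, exists F : nat -> rel T,
    [/\ 0 < d1, forall s, linear_ext_on le (Mset le C h (minn i h)) (F s) &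
    {in Mset le C h (minn i h) &, forall x y, le x y <-> (forall s, s < d1 -> F s x y)}].
  move=> i; apply: dim_norm; apply: Hdim; first exact: M_convex.
  apply/bigmax_leqP => Y /andP[sY cY].
  apply: (M_height Hpo k2 nkk cC hC Cmax _ sY cY); exact: geq_minr.
pose FF := fun i => proj1_sig (constructive_indefinite_description _ (Hn i)).
have FFP : forall i, [/\ 0 < d1, forall s, linear_ext_on le (Mset le C h (minn i h)) (FF i s) &
    {in Mset le C h (minn i h) &, forall x y, le x y <-> (forall s, s < d1 -> FF i s x y)}].
  move=> i; exact: (proj2_sig (constructive_indefinite_description _ (Hn i))).
have [d0 _ _] := FFP 0.
pose N := (h + 1) * d1.
have idx : forall n : 'I_N, minn (n %/ d1) h = n %/ d1.
  move=> n; apply/minn_idPl; have := ltn_ord n; rewrite /N => hn.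
  by rewrite -ltnS ltn_divLR // -(addn1 h).
pose Ls := fun n : 'I_N => Ext le C h (n %/ d1) (FF (n %/ d1) (n %% d1)).
have Llin : forall n, linear_ext_on le [set: T] (Ls n).
  move=> n; apply: Ext_lin => //; have [_ H _] := FFP (n %/ d1); rewrite idx in H; exact: H.
exists N, Ls; split => //.
  by rewrite /N muln_gt0 addn1 d0.
split => // x y _ _; split.
  by move=> lxy n; have [_ _ _ _ E] := Llin n; apply: E; rewrite ?inE.
move=> H; case: (boolP (le x y)) => // nxy; exfalso.
have N0 : 0 < N by rewrite /N muln_gt0 addn1 d0.
case: (boolP (le y x)) => lyx.
  have [_ A _ _ E] := Llin (Ordinal N0).
  have e : x = y by apply: A; rewrite ?inE // H E // inE.
  by move: nxy; rewrite e (po_refl Hpo).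
pose i := #|Dn le C y|.
have ih : i <= h by rewrite -hC; apply: subset_leq_card; apply/subsetP => c; rewrite inE => /andP[].
have ud := UpDn_self C Hpo nxy.
have by1 : blk le C h i y <= 1 by rewrite /blk ltnn; case: ifP.
have ux : (h - i < #|Up le C x|) = false.
  by apply/negbTE; rewrite -leqNgt -hC; move: ud; rewrite /i; clear; lia.
have bx1 : 1 <= blk le C h i x by rewrite /blk ux; case: ifP.
have ilt : forall s, s < d1 -> i * d1 + s < N.
  move=> s hs; rewrite /N mulnDl mul1n; have := leq_mul ih (leqnn d1); clear -hs; lia.
have Lsi : forall s (hs : s < d1), Ls (Ordinal (ilt s hs)) x y = Ext le C h i (FF i s) x y.
  move=> s hs; rewrite /Ls /=.
  have -> : (i * d1 + s) %/ d1 = i by rewrite divnMDl // divn_small // addn0.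
  have -> : (i * d1 + s) %% d1 = s by rewrite modnMDl modn_small.
  by [].
case: (eqVneq (blk le C h i x) (blk le C h i y)) => [e|ne].
  have ex : blk le C h i x = 1 by move: e by1 bx1; clear; lia.
  have xM : x \in Mset le C h i by rewrite -blk_M ex.
  have yM : y \in Mset le C h i by rewrite -blk_M -e ex.
  have [_ _ Hre] := FFP i; rewrite (minn_idPl ih) in Hre.
  case: (pickP (fun s : 'I_d1 => ~~ FF i s x y)) => [s ns | none].
    have := H (Ordinal (ilt s (ltn_ord s))); rewrite Lsi /Ext e eqxx -e ex eqxx.
    by rewrite (negbTE ns).
  move/negP: nxy; apply; apply/(Hre x y xM yM) => s hs.
  by have := none (Ordinal hs); rewrite /= => /negbFE.
have := H (Ordinal (ilt 0 d0)); rewrite Lsi /Ext (negbTE ne).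
by move: by1 bx1; clear; lia.
Qed.
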